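(* Let $\mathcal{X}$ and $\mathcal{Y}$ be finite sets with $2 \le |\mathcal{X}|,|\mathcal{Y}| < \infty$, and let $X,Y$ have joint pmf $P_{X,Y}$ with $P_X(x)>0$ for all $x\in\mathcal{X}$ and $P_Y(y)>0$ for all $y\in\mathcal{Y}$. Let $f:(0,\infty)\to\mathbb{R}$ be convex, strictly convex and thrice differentiable at $1$, with $f(1)=0$ and $f''(1)>0$, such that for every $t\in(0,\infty)$, $$\bigl(f(t)-f'(1)(t-1)\bigr)\left(1-\frac{f'''(1)}{3f''(1)}(t-1)\right)\ge \frac{f''(1)}{2}(t-1)^2 .$$ Suppose further that the function $g:(0,\infty)\to\mathbb{R}$, $g(x)=\frac{f(x)-f(0)}{x}$ with $f(0)=\lim_{t\to0^+}f(t)$, is concave. Then $$\eta_{\chi^2}(P_X,P_{Y|X})\le\eta_f(P_X,P_{Y|X})\le \frac{f'(1)+f(0)}{f''(1)\min_{x\in\mathcal{X}}P_X(x)}\,\eta_{\chi^2}(P_X,P_{Y|X}).$$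
   Context: Let $W$ be the column stochastic matrix of the channel $P_{Y|X}$ (its $x$th column is $P_{Y|X=x}$), mapping a pmf $R_X$ on $\mathcal{X}$ to $WR_X$. Strict convexity at $1$ means $\lambda f(x)+(1-\lambda)f(y)>f(1)$ whenever $\lambda\in(0,1)$, $x,y>0$, $\lambda x+(1-\lambda)y=1$. The $f$-divergence is $D_f(R_X\|P_X)=\sum_x P_X(x)f(R_X(x)/P_X(x))$ with conventions $f(0)=\lim_{t\to0^+}f(t)$, $0f(0/0)=0$, $0f(r/0)=r\lim_{p\to0^+}pf(1/p)$ for $r>0$. The $\chi^2$-divergence is $\chi^2(R_X\|P_X)=\sum_x (R_X(x)-P_X(x))^2/P_X(x)$ (the case $f(t)=t^2-1$). The contraction coefficient is $\eta_f(P_X,P_{Y|X})=\sup\{D_f(WR_X\|WP_X)/D_f(R_X\|P_X): R_X \text{ a pmf on } \mathcal{X},\ 0<D_f(R_X\|P_X)<\infty\}$, and $\eta_{\chi^2}$ is this coefficient for the $\chi^2$-divergence. *)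

(* Defs.v *)
From HB Require Import structures.
From mathcomp Require Import all_boot all_order all_algebra.
From mathcomp Require Import all_classical all_reals all_analysis.
Set Implicit Arguments. Unset Strict Implicit. Unset Printing Implicit Defensive.
Import Order.TTheory GRing.Theory Num.Theory.
Import numFieldNormedType.Exports.
Local Open Scope classical_set_scope.
Local Open Scope ring_scope.

Section Defs.
Variable R : realType.

Definition is_pmf (T : finType) (p : T -> R) : Prop :=
  (forall t, 0 <= p t) /\ \sum_(t : T) p t = 1.

Definition is_joint_pmf (X Y : finType) (PXY : X -> Y -> R) : Prop :=
  (forall x y, 0 <= PXY x y) /\ \sum_(x : X) \sum_(y : Y) PXY x y = 1.

Definition marginalX (X Y : finType) (PXY : X -> Y -> R) (x : X) : R :=
  \sum_(y : Y) PXY x y.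
Definition marginalY (X Y : finType) (PXY : X -> Y -> R) (y : Y) : R :=
  \sum_(x : X) PXY x y.

(* column-stochastic channel matrix W y x = P_{Y|X}(y|x) *)
Definition channel (X Y : finType) (PXY : X -> Y -> R) (y : Y) (x : X) : R :=
  PXY x y / marginalX PXY x.

Definition push (X Y : finType) (W : Y -> X -> R) (r : X -> R) (y : Y) : R :=
  \sum_(x : X) W y x * r x.

(* f-divergence D_f(r || p), with f(0) := f0 (the right limit at 0).
   Used only with p > 0 everywhere; the term for p t = 0, r t = 0 is 0. *)
Definition fdiv (f : R -> R) (f0 : R) (T : finType) (r p : T -> R) : R :=
  \sum_(t : T) p t * (if r t == 0 then f0 else f (r t / p t)).

Definition chi2div (T : finType) (r p : T -> R) : R :=
  \sum_(t : T) (r t - p t) ^+ 2 / p t.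

Definition contr_coef (X Y : finType)
  (DX : (X -> R) -> (X -> R) -> R) (DY : (Y -> R) -> (Y -> R) -> R)
  (PX : X -> R) (W : Y -> X -> R) : \bar R :=
  ereal_sup [set ((DY (push W r) (push W PX)) / (DX r PX))%:E
            | r in [set r : X -> R | is_pmf r /\ 0 < DX r PX]].

(* min_x p x ; the neutral element 1 is harmless for pmfs (all values <= 1) *)
Definition minval (T : finType) (p : T -> R) : R := \big[Num.min/1]_(t : T) p t.

Definition convex_pos (f : R -> R) : Prop :=
  forall x y (l : R), 0 < x -> 0 < y -> 0 <= l <= 1 ->
    f (l * x + (1 - l) * y) <= l * f x + (1 - l) * f y.

Definition concave_pos (g : R -> R) : Prop :=
  forall x y (l : R), 0 < x -> 0 < y -> 0 <= l <= 1 ->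
    l * g x + (1 - l) * g y <= g (l * x + (1 - l) * y).

Definition strictly_convex_at1 (f : R -> R) : Prop :=
  forall (l x y : R), 0 < l < 1 -> 0 < x -> 0 < y -> l * x + (1 - l) * y = 1 ->
    f 1 < l * f x + (1 - l) * f y.

Definition thrice_diff_at1 (f : R -> R) : Prop :=
  (\forall x \near (1 : R), derivable f x 1 /\ derivable (derive1n 1 f) x 1)
  /\ derivable (derive1n 2 f) 1 1.

End Defs.

(* Main.v *)
Require Import Defs.
From HB Require Import structures.
From mathcomp Require Import all_boot all_order all_algebra.
From mathcomp Require Import all_classical all_reals all_analysis.
From mathcomp Require Import ring lra.
Import Order.TTheory GRing.Theory Num.Theory.
Import numFieldNormedType.Exports.
Local Open Scope classical_set_scope.
Local Open Scope ring_scope.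
Lemma deriv_eps {R:realType} (f : R -> R) (x : R) : derivable f x 1 ->
  forall e : R, 0 < e -> exists2 d : R, 0 < d &
  forall h : R, h != 0 -> `|h| < d -> `|h^-1 * (f (h + x) - f x) - derive1 f x| < e.
Proof.
move=> df e e0.
have H := df.
rewrite /derivable in H.
move/cvgrPdist_lt : H => /(_ e e0).
move/nbhs_ballP => [d /= d0 Hd].
exists d => // h h0 hd.
have := Hd h.
rewrite /ball /= sub0r normrN => /(_ hd h0).
rewrite derive1E /derive distrC /=.
move=> H; rewrite [h%:A]mulr1 in H; exact: H.
Qed.
Lemma quad_derive {R:realType} (a c x : R) :
  is_derive x 1 (fun y : R => a * (y - 1) + c * ((y - 1) * (y - 1))) (a + c * (2 * (x - 1))).
Proof.
have H1 : is_derive x (1:R) ((@id R) - cst 1) (1 - 0).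
  apply: is_deriveB.
have H2 := is_deriveM H1 H1.
have H3 := is_deriveZ c H2.
have H4 := is_deriveZ a H1.
have H5 := is_deriveD H4 H3.
apply: is_derive_eq H5 _.
rewrite /GRing.scale /=. have -> : (id - cst 1 : R -> R) x = x - 1 by []. ring.
Qed.
Lemma alg1 {R : realType} (q D1 D2 e z : R) :
  q*(z-1) + D1 - (D1 + (D2/2+e)*(2*(z-1))) = (q - D2 - 2*e)*(z-1).
Proof. by field. Qed.

Lemma taylor_up (R:realType) (f : R -> R) :
  (\forall x \near (1:R), derivable f x 1) -> derivable (derive1 f) 1 1 ->
  forall eta : R, 0 < eta -> exists2 d : R, 0 < d & forall h : R, `|h| < d ->
   f (1 + h) - f 1 - derive1 f 1 * h <= (derive1 (derive1 f) 1 / 2 + eta) * h ^+ 2.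
Proof.
move=> /nbhs_ballP [d1 d10 Hd1] df1 eta eta0.
have [d2 d20 Hd2] := @deriv_eps _ _ _ df1 (2 * eta) ltac:(lra).
exists (Num.min d1 d2); first by rewrite lt_min d10 d20.
move=> h; rewrite lt_min => /andP[hd1 hd2].
set D1 := derive1 f 1; set D2 := derive1 (derive1 f) 1; set c := D2 / 2 + eta.
set psi := fun y => f y - (D1 * (y - 1) + c * ((y - 1) * (y - 1))).
set dpsi := fun y => derive1 f y - (D1 + c * (2 * (y - 1))).
have der : forall y, `|y - 1| < d1 -> is_derive y 1 psi (dpsi y).
  move=> y hy.
  have dy : derivable f y 1 by apply: Hd1; rewrite /ball /= distrC.
  have := derivableP dy; rewrite -derive1E => Hf.
  exact: (is_deriveB Hf (quad_derive D1 c y)).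
have sgn : forall y, `|y - 1| < Num.min d1 d2 -> dpsi y * (y - 1) <= 0.
  move=> y; rewrite lt_min => /andP[_ hy2].
  have [->|ny] := eqVneq (y - 1) 0; first by rewrite mulr0.
  have := Hd2 (y - 1) ny hy2.
  rewrite subrK -/D1 -/D2.
  set q := (y - 1)^-1 * (derive1 f y - D1) => Hq.
  have eq1 : derive1 f y - D1 = q * (y - 1) by rewrite /q mulrAC mulVf // mul1r.
  have : q - D2 < 2 * eta by move: Hq; rewrite ltr_norml => /andP[].
  rewrite /dpsi /c.
  have -> : derive1 f y - (D1 + (D2 / 2 + eta) * (2 * (y - 1))) = (q - D2 - 2 * eta) * (y - 1).
    rewrite -[derive1 f y](subrK D1) eq1; move: (q) (D1) (D2) (eta) (y) => a b c0 e z; exact: alg1.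
  move=> Hlt; rewrite -mulrA; apply: mulr_le0_ge0; [lra|exact: sqr_ge0].
have psi1 : psi 1 = f 1 by rewrite /psi /= subrr !mulr0 addr0 subr0.
have psih : psi (1 + h) = f (1 + h) - D1 * h - c * h ^+ 2.
  rewrite /psi /=; have -> : 1 + h - 1 = h by ring.
  by rewrite expr2 opprD addrA.
have cont : forall a b, `|a - 1| < d1 -> `|b - 1| < d1 -> {within `[a, b], continuous psi}.
  move=> a b ha hb; apply: derivable_within_continuous => y.
  rewrite in_itv /= => /andP[ay yb].
  have hy : `|y - 1| < d1.
    move: ha hb; rewrite !ltr_norml => /andP[? ?] /andP[? ?].
    apply/andP; split; lra.
  by case: (der y hy).
have hd : `|h| < Num.min d1 d2 by rewrite lt_min hd1 hd2.
have [hneg|hpos|->] := ltgtP h 0; last by rewrite expr0n /= mulr0 mulr0 addr0 subr0 subrr.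
- have := MVT (f := psi) (df := dpsi) (a := 1 + h) (b := 1) ltac:(lra) _ _.
  case.
  + move=> y; rewrite in_itv /= => /andP[ay yb]; apply: der.
    move: hd1; rewrite !ltr_norml => /andP[? ?]; apply/andP; split; lra.
  + apply: cont; first by rewrite addrAC subrr add0r.
    by rewrite subrr normr0.
  move=> y; rewrite in_itv /= => /andP[ay yb] E.
  have hy : `|y - 1| < Num.min d1 d2.
    move: hd; rewrite !ltr_norml => /andP[? ?]; apply/andP; split; lra.
  have := sgn y hy.
  have y1 : y - 1 < 0 by lra.
  move=> sg; have dp : 0 <= dpsi y by nra.
  rewrite psi1 psih in E.
  have : 0 <= dpsi y * (1 - (1 + h)) by apply: mulr_ge0 => //; lra.
  rewrite -E; lra.
- have := MVT (f := psi) (df := dpsi) (a := 1) (b := 1 + h) ltac:(lra) _ _.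
  case.
  + move=> y; rewrite in_itv /= => /andP[ay yb]; apply: der.
    move: hd1; rewrite !ltr_norml => /andP[? ?]; apply/andP; split; lra.
  + apply: cont; last by rewrite addrAC subrr add0r.
    by rewrite subrr normr0.
  move=> y; rewrite in_itv /= => /andP[ay yb] E.
  have hy : `|y - 1| < Num.min d1 d2.
    move: hd; rewrite !ltr_norml => /andP[? ?]; apply/andP; split; lra.
  have := sgn y hy.
  have y1 : 0 < y - 1 by lra.
  move=> sg; have dp : dpsi y <= 0 by nra.
  rewrite psi1 psih in E.
  have : dpsi y * (1 + h - 1) <= 0 by apply: mulr_le0_ge0 => //; lra.
  rewrite -E; lra.
Qed.
Lemma tangent (R:realType) (h : R -> R) (x0 L : R) : 0 < x0 -> convex_pos h ->
 (forall e : R, 0<e -> exists2 d : R, 0<d & forall u : R, u != 0 -> `|u| < d ->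
     `|u^-1 * (h (u + x0) - h x0) - L| < e) ->
 forall t, 0 < t -> h x0 + L * (t - x0) <= h t.
Proof.
move=> x0p cvx H t tp.
have [->|tx] := eqVneq t x0; first by rewrite subrr mulr0 addr0.
set m := `|t - x0|.
have m0 : 0 < m by rewrite normr_gt0 subr_eq0.
apply/ler_addgt0Pr => e e0.
have [d d0 Hd] := H (e / m) (divr_gt0 e0 m0).
set s := Num.min (1/2) (d / (2 * m)).
have s0 : 0 < s by rewrite lt_min; apply/andP; split; [lra| apply: divr_gt0 => //; lra].
have s12 : s <= 1/2 by rewrite ge_min lexx.
have sd : s <= d / (2 * m) by rewrite ge_min lexx orbT.
set u := s * (t - x0).
have nu : `|u| = s * m by rewrite normrM gtr0_norm.
have u0 : u != 0 by rewrite -normr_gt0 nu mulr_gt0.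
have ud : `|u| < d.
  rewrite nu; have : s * m <= d / (2 * m) * m by rewrite ler_pM2r.
  have -> : d / (2 * m) * m = d / 2 by field; rewrite gt_eqF.
  lra.
have := Hd u u0 ud.
set Q := u^-1 * (h (u + x0) - h x0) => HQ.
have eq1 : h (u + x0) - h x0 = Q * u by rewrite /Q mulrAC mulVf // mul1r.
have cv : h (u + x0) <= s * h t + (1 - s) * h x0.
  have -> : u + x0 = s * t + (1 - s) * x0 by rewrite /u; ring.
  apply: cvx => //; apply/andP; split; lra.
have A1 : - `|(Q - L) * u| <= (Q - L) * u.
  by have := lexx `|(Q - L) * u|; rewrite ler_norml => /andP[].
have A2 : `|(Q - L) * u| <= e * s.
  rewrite normrM nu; have := ltW HQ => HQ'.
  have : `|Q - L| * (s * m) <= e / m * (s * m) by rewrite ler_pM2r // mulr_gt0.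
  have -> : e / m * (s * m) = e * s by field; rewrite gt_eqF.
  done.
have key : 0 <= s * (h t - (h x0 + L * (t - x0)) + e).
  have : Q * u <= s * (h t - h x0) by rewrite -eq1; lra.
  rewrite /u; move: A1 A2; rewrite /u => A1 A2; nra.
have : 0 <= h t - (h x0 + L * (t - x0)) + e.
  by rewrite -(pmulr_rge0 _ s0).
lra.
Qed.
Lemma g_bound {R:realType} (f : R -> R) (f0 : R) :
  derivable f 1 1 -> f 1 = 0 ->
  concave_pos (fun x => (f x - f0) / x) ->
  forall t, 0 < t -> f t <= f0 * (1 - t) + (derive1 f 1 + f0) * (t * (t - 1)).
Proof.
move=> df f1 cc t tp.
set c := derive1 f 1 + f0.
set h := fun x => - ((f x - f0) / x).
have cvh : convex_pos h.
  move=> x y l xp yp lb; have := cc x y l xp yp lb; rewrite /h; lra.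
have H : forall e : R, 0 < e -> exists2 d : R, 0 < d & forall u : R, u != 0 -> `|u| < d ->
     `|u^-1 * (h (u + 1) - h 1) - (- c)| < e.
  move=> e e0.
  have [dq dq0 Hq] := @deriv_eps _ _ _ df (e / 4) ltac:(lra).
  have cp : 0 < `|c| + 1 by rewrite ltr_pwDr // normr_ge0.
  exists (Num.min (1/2) (Num.min dq (e / (4 * (`|c| + 1))))).
    rewrite !lt_min; apply/and3P; split => //.
    by apply: divr_gt0 => //; rewrite mulr_gt0.
  move=> u u0; rewrite !lt_min => /and3P[u12 udq ue].
  have := Hq u u0 udq; rewrite f1 subr0.
  set Q := u^-1 * f (u + 1) => HQ.
  have u1 : 1/2 <= u + 1 by move: u12; rewrite ltr_norml => /andP[]; lra.
  have u1n : u + 1 != 0 by apply/negP => /eqP; lra.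
  have eqh : u^-1 * (h (u + 1) - h 1) - - c = ((derive1 f 1 - Q) + c * u) / (u + 1).
    rewrite /h /Q f1 /c; field; by rewrite u0 u1n.
  rewrite eqh normrM normfV (gtr0_norm (x := u + 1)); last lra.
  rewrite ltr_pdivrMr; last lra.
  have A1 : `|derive1 f 1 - Q + c * u| <= `|derive1 f 1 - Q| + `|c| * `|u|.
    by rewrite -normrM ler_normD.
  have A2 : `|c| * `|u| <= e / 4.
    have : `|u| * (4 * (`|c| + 1)) <= e.
      by rewrite -ler_pdivlMr ?mulr_gt0 // ltW.
    have : 0 <= `|c| * `|u| by rewrite mulr_ge0 ?normr_ge0.
    have := normr_ge0 u; nra.
  have A3 : `|derive1 f 1 - Q| < e / 4 by rewrite distrC.
  nra.
have := @tangent _ h 1 (- c) ltr01 cvh H t tp.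
rewrite /h f1 sub0r divr1 opprK => Hle.
have : (f t - f0) / t <= - f0 + c * (t - 1) by lra.
rewrite ler_pdivrMr // => Hm.
have -> : f t = (f t - f0) + f0 by ring.
nra.
Qed.
Lemma lim_at0 {R:realType} (f:R->R) (f0 d1 a k : R) :
 f x @[x --> 0^'+] --> f0 ->
 (forall t, 0 < t -> k * (t - 1)^+2 <= (f t - d1 * (t - 1)) * (1 - a * (t - 1))) ->
 k <= (f0 + d1) * (1 + a).
Proof.
move=> cf H.
have id0 : (fun t : R => t) @ 0^'+ --> (0:R) by apply: cvg_at_right_filter; exact: cvg_id.
have c1 : (fun t : R => k * ((t - 1) * (t - 1))) @ 0^'+ --> k * (0 - 1)^+2.
  apply: cvgM; first exact: cvg_cst.
  rewrite expr2; apply: cvgM; apply: cvgB => //; exact: cvg_cst.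
have c2 : (fun t : R => (f t - d1 * (t - 1)) * (1 - a * (t - 1))) @ 0^'+ -->
   (f0 - d1 * (0 - 1)) * (1 - a * (0 - 1)).
  apply: cvgM; apply: cvgB => //; try exact: cvg_cst;
  apply: cvgM; try exact: cvg_cst; apply: cvgB => //; exact: cvg_cst.
have := ler_cvg_to c1 c2 _.
have -> : k * (0 - 1)^+2 = k by rewrite sub0r sqrrN expr1n mulr1.
have -> : (f0 - d1 * (0 - 1)) * (1 - a * (0 - 1)) = (f0 + d1) * (1 + a).
  by rewrite sub0r !mulrN1 !opprK.
apply.
near=> t; apply: H.
near: t; exact: nbhs_right_gt.
Unshelve. all: by end_near.
Qed.
Lemma amgm {R:realType} {G W k x l : R} : 0 <= G -> 0 <= W -> 0 < k -> 0 < l ->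
  k * x^+2 <= G * W -> 2 * k * `|x| <= l * G + k / l * W.
Proof.
move=> G0 W0 k0 l0 H.
set S := l * G + k / l * W.
have kl : 0 <= k / l by rewrite divr_ge0 // ltW.
have S0 : 0 <= S by rewrite /S; nra.
have E : S ^+ 2 = (l * G - k / l * W) ^+ 2 + 4 * k * (G * W).
  rewrite /S; field; by rewrite gt_eqF.
have H2 : (2 * k * `|x|) ^+ 2 <= S ^+ 2.
  rewrite E exprMn (real_normK (num_real x)).
  have : 0 <= (l * G - k / l * W) ^+ 2 by exact: sqr_ge0.
  have : 4 * k * (k * x^+2) <= 4 * k * (G * W) by rewrite ler_pM2l // mulr_gt0.
  move=> *; nra.
have xa : 0 <= 2 * k * `|x| by rewrite mulr_ge0 // mulr_ge0 // ltW.
by rewrite -(ler_pXn2r (n := 2)) // ?nnegrE.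
Qed.

Lemma sum_dev {R:realType} (T : finType) (r p : T -> R) :
  \sum_x r x = \sum_x p x -> forall x, 2 * `|r x - p x| <= \sum_y `|r y - p y|.
Proof.
move=> H x.
rewrite (bigD1 x) //=.
have : r x - p x = - \sum_(y | y != x) (r y - p y).
  have : \sum_y (r y - p y) = 0 by rewrite sumrB H subrr.
  by rewrite (bigD1 x) //= => /eqP; rewrite addr_eq0 => /eqP.
move=> ->; rewrite normrN.
have := ler_norm_sum (index_enum T) (fun y => r y - p y) (fun y => y != x).
lra.
Qed.

Lemma chi2_V {R:realType} (T : finType) (r p : T -> R) (m : R) :
  (forall x, 0 < p x) -> 0 < m -> (forall x, m <= p x) ->
  \sum_x r x = \sum_x p x ->
  2 * m * chi2div r p <= (\sum_x `|r x - p x|) ^+ 2.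
Proof.
move=> pp m0 mp H.
have L : 2 * m * chi2div r p <= \sum_x (`|r x - p x| * \sum_y `|r y - p y|).
  rewrite /chi2div mulr_sumr; apply: ler_sum => x _.
  have Hx := @sum_dev _ _ _ _ H x.
  move: Hx; set V := \sum_y `|r y - p y| => Hx.
  have px := pp x; have mx := mp x.
  set a := `|r x - p x| in Hx *.
  have a0 : 0 <= a := normr_ge0 _.
  have -> : (r x - p x) ^+ 2 = a ^+ 2 by rewrite real_normK // num_real.
  have -> : 2 * m * (a ^+ 2 / p x) = (m / p x) * (2 * a) * a.
    rewrite expr2; field; by rewrite gt_eqF.
  have mp1 : m / p x <= 1 by rewrite ler_pdivrMr // mul1r.
  have mp0 : 0 <= m / p x by rewrite divr_ge0 // ltW.
  have : (m / p x) * (2 * a) <= 2 * a by nra.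
  nra.
apply: (le_trans L); by rewrite -mulr_suml expr2.
Qed.

Definition Fv {R:realType} (f : R -> R) (f0 d1 : R) {T : finType} (r p : T -> R) (x : T) : R :=
  (if r x == 0 then f0 else f (r x / p x)) - d1 * (r x / p x - 1).

Lemma fdiv_F {R:realType} (f : R -> R) (f0 d1 : R) (T : finType) (r p : T -> R) :
  (forall x, 0 < p x) -> \sum_x r x = \sum_x p x ->
  fdiv f f0 r p = \sum_x p x * Fv f f0 d1 r p x.
Proof.
move=> pp H.
rewrite /fdiv /Fv.
have -> : \sum_x p x * ((if r x == 0 then f0 else f (r x / p x)) - d1 * (r x / p x - 1))
   = \sum_x p x * (if r x == 0 then f0 else f (r x / p x)) - d1 * \sum_x (r x - p x).
  rewrite mulr_sumr -sumrB; apply: eq_bigr => x _.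
  have := pp x => px; field; by rewrite gt_eqF.
by rewrite sumrB H subrr mulr0 subr0.
Qed.

Lemma fdiv_lb {R:realType} (f : R -> R) (f0 d1 k a : R) (T : finType) (r p : T -> R) :
 0 < k -> (forall t, 0 < t -> 0 <= f t - d1 * (t - 1)) -> 0 <= f0 + d1 ->
 k <= (f0 + d1) * (1 + a) ->
 (forall t, 0 < t -> k * (t - 1) ^+ 2 <= (f t - d1 * (t - 1)) * (1 - a * (t - 1))) ->
 (forall x, 0 < p x) -> (forall x, 0 <= r x) -> \sum_x r x = \sum_x p x -> \sum_x p x = 1 ->
 k * (\sum_x `|r x - p x|) ^+ 2 <= fdiv f f0 r p.
Proof.
move=> k0 P1 P2 P3 Hc pp rp Hs p1.
rewrite (@fdiv_F _ f f0 d1 _ r p pp Hs).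
set G := Fv f f0 d1 r p.
set W := fun x => 1 - a * (r x / p x - 1).
have HG : forall x, [/\ 0 <= G x, 0 <= W x & k * (r x / p x - 1) ^+ 2 <= G x * W x].
  move=> x; rewrite /G /W /Fv.
  have px := pp x.
  have [r0|rn0] := eqVneq (r x) 0.
    rewrite r0 mul0r sub0r mulrN1 !opprK.
    have -> : (-1 : R) ^+ 2 = 1 by rewrite sqrrN expr1n.
    rewrite mulr1; split => //; nra.
  idtac.
  have t0 : 0 < r x / p x by rewrite divr_gt0 // lt_def rn0 rp.
  have A := Hc _ t0; have B := P1 _ t0.
  split => //.
  have [t1|t1] := eqVneq (r x / p x - 1) 0.
    by rewrite t1 mulr0 subr0.
  have : 0 < k * (r x / p x - 1) ^+ 2 by rewrite mulr_gt0 // exprn_even_gt0.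
  nra.
have HT : forall l, 0 < l -> forall x,
    2 * k * `|r x - p x| <= l * (p x * G x) + k / l * (p x * W x).
  move=> l l0 x; have [g0 w0 gw] := HG x.
  have := amgm g0 w0 k0 l0 gw.
  have px := pp x.
  have -> : `|r x - p x| = p x * `|r x / p x - 1|.
    have -> : r x - p x = p x * (r x / p x - 1) by field; rewrite gt_eqF.
    by rewrite normrM gtr0_norm.
  move=> h; have := ler_wpM2l (ltW px) h; lra.
have SW : \sum_x p x * W x = 1.
  rewrite /W.
  have -> : \sum_x p x * (1 - a * (r x / p x - 1)) = \sum_x p x - a * \sum_x (r x - p x).
    rewrite mulr_sumr -sumrB; apply: eq_bigr => x _.
    have := pp x => px; field; by rewrite gt_eqF.
  by rewrite sumrB Hs subrr mulr0 subr0.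
set V := \sum_x `|r x - p x|.
set D := \sum_x p x * G x.
have HS : forall l, 0 < l -> 2 * k * V <= l * D + k / l.
  move=> l l0.
  have : \sum_x 2 * k * `|r x - p x| <= \sum_x (l * (p x * G x) + k / l * (p x * W x)).
    by apply: ler_sum => x _; exact: HT.
  by rewrite -mulr_sumr big_split /= -!mulr_sumr SW mulr1.
have V0 : 0 <= V by rewrite /V sumr_ge0 // => x _; exact: normr_ge0.
have [V00|Vp] := eqVneq V 0.
  rewrite V00 expr0n /= mulr0 /D sumr_ge0 // => x _.
  by have [g0 _ _] := HG x; rewrite mulr_ge0 // ltW.
have Vp' : 0 < V by rewrite lt_def Vp V0.
have := HS (V^-1) (ltac:(by rewrite invr_gt0)).
rewrite invrK => h.
have : k * V ^+ 2 <= D.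
  have : 2 * k * V * V <= (V^-1 * D + k * V) * V by rewrite ler_pM2r.
  have -> : (V^-1 * D + k * V) * V = D + k * V ^+ 2 by field; rewrite Vp.
  rewrite expr2; nra.
done.
Qed.

Lemma fdiv_ub {R:realType} (f : R -> R) (f0 c : R) (T : finType) (q p : T -> R) :
  (forall t, 0 < t -> f t <= f0 * (1 - t) + c * (t * (t - 1))) ->
  (forall x, 0 < p x) -> (forall x, 0 <= q x) -> \sum_x q x = \sum_x p x ->
  fdiv f f0 q p <= c * chi2div q p.
Proof.
move=> Hg pp qp Hs.
have L : fdiv f f0 q p <=
    \sum_x (f0 * (p x - q x) + c * ((q x - p x) ^+ 2 / p x) + c * (q x - p x)).
  apply: ler_sum => x _.
  have px := pp x.
  have [q0|qn0] := eqVneq (q x) 0.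
    rewrite q0 subr0 sub0r sqrrN expr2.
    rewrite -addrA; have -> : c * (p x * p x / p x) + c * - p x = 0 by field; rewrite gt_eqF.
    by rewrite addr0 mulrC.
  have t0 : 0 < q x / p x by rewrite divr_gt0 // lt_def qn0 qp.
  have := Hg _ t0 => h.
  have := ler_wpM2l (ltW px) h.
  have -> : p x * (f0 * (1 - q x / p x) + c * (q x / p x * (q x / p x - 1))) =
      f0 * (p x - q x) + c * ((q x - p x) ^+ 2 / p x) + c * (q x - p x).
    by rewrite expr2; field; rewrite gt_eqF.
  done.
apply: (le_trans L).
rewrite big_split big_split /= -!mulr_sumr !sumrB Hs !subrr !mulr0 add0r addr0.
by rewrite /chi2div.
Qed.

Lemma fdiv_taylor {R:realType} (f : R -> R) (f0 d1 K del : R) (T : finType) (r p : T -> R) :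
  (forall h, `|h| < del -> f (1 + h) - f 1 - d1 * h <= K * h ^+ 2) -> f 1 = 0 ->
  (forall x, 0 < p x) -> (forall x, 0 < r x) -> (forall x, `|r x / p x - 1| < del) ->
  \sum_x r x = \sum_x p x ->
  fdiv f f0 r p <= K * chi2div r p.
Proof.
move=> Ht f1 pp rp rd Hs.
rewrite (@fdiv_F _ f f0 d1 _ r p pp Hs) /chi2div mulr_sumr.
apply: ler_sum => x _.
have px := pp x.
rewrite /Fv (gt_eqF (rp x)).
have := Ht _ (rd x); rewrite f1 subr0 [1 + _]addrC subrK => h.
have := ler_wpM2l (ltW px) h.
have -> : p x * (K * (r x / p x - 1) ^+ 2) = K * ((r x - p x) ^+ 2 / p x).
  by rewrite !expr2; field; rewrite gt_eqF.
done.
Qed.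

Lemma fdiv_lowloc {R:realType} (f : R -> R) (f0 d1 k a eta : R) (T : finType) (r p : T -> R) :
  (forall t, 0 < t -> 0 <= f t - d1 * (t - 1)) ->
  (forall t, 0 < t -> k * (t - 1) ^+ 2 <= (f t - d1 * (t - 1)) * (1 - a * (t - 1))) ->
  (forall x, 0 < p x) -> (forall x, 0 < r x) -> (forall x, `|a * (r x / p x - 1)| <= eta) ->
  \sum_x r x = \sum_x p x ->
  k * chi2div r p <= (1 + eta) * fdiv f f0 r p.
Proof.
move=> P1 Hc pp rp ra Hs.
rewrite (@fdiv_F _ f f0 d1 _ r p pp Hs) /chi2div !mulr_sumr.
apply: ler_sum => x _.
have px := pp x.
rewrite /Fv (gt_eqF (rp x)).
have t0 : 0 < r x / p x by rewrite divr_gt0.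
have A := Hc _ t0; have B := P1 _ t0; have C := ra x.
move: C; rewrite ler_norml => /andP[C1 C2].
have : k * (r x / p x - 1) ^+ 2 <= (1 + eta) * (f (r x / p x) - d1 * (r x / p x - 1)) by nra.
move=> h; have := ler_wpM2l (ltW px) h.
have -> : p x * (k * (r x / p x - 1) ^+ 2) = k * ((r x - p x) ^+ 2 / p x).
  by rewrite !expr2; field; rewrite gt_eqF.
move=> h2; apply: (le_trans h2); rewrite mulrCA; done.
Qed.
Lemma minval_gt0 {R:realType} (T : finType) (p : T -> R) : (forall x, 0 < p x) -> 0 < minval p.
Proof.
move=> pp; rewrite /minval; elim/big_ind: _ => //.
by move=> a b a0 b0; rewrite lt_min a0 b0.
Qed.

Lemma minval_le {R:realType} (T : finType) (p : T -> R) x : minval p <= p x.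
Proof. by rewrite /minval (bigD1 x) //= ge_min lexx. Qed.

Lemma pmf_le1 {R:realType} (T : finType) (p : T -> R) x :
  (forall y, 0 <= p y) -> \sum_y p y = 1 -> p x <= 1.
Proof.
move=> p0 p1; rewrite -p1 (bigD1 x) //= lerDl; exact: sumr_ge0.
Qed.

Lemma push_sum {R:realType} (X Y : finType) (PXY : X -> Y -> R) (r : X -> R) :
  (forall x, 0 < marginalX PXY x) ->
  \sum_y push (channel PXY) r y = \sum_x r x.
Proof.
move=> pp; rewrite /push exchange_big /=; apply: eq_bigr => x _.
rewrite -mulr_suml /channel -mulr_suml.
have := pp x; rewrite /marginalX => h.
by rewrite divff ?gt_eqF // mul1r.
Qed.

Lemma push_PX {R:realType} (X Y : finType) (PXY : X -> Y -> R) y :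
  (forall x, 0 < marginalX PXY x) ->
  push (channel PXY) (marginalX PXY) y = marginalY PXY y.
Proof.
move=> pp; rewrite /push /marginalY; apply: eq_bigr => x _.
by rewrite /channel divfK // gt_eqF.
Qed.

Lemma push_ge0 {R:realType} (X Y : finType) (PXY : X -> Y -> R) (r : X -> R) y :
  (forall x y, 0 <= PXY x y) -> (forall x, 0 < marginalX PXY x) -> (forall x, 0 <= r x) ->
  0 <= push (channel PXY) r y.
Proof.
move=> p0 pp r0; rewrite /push sumr_ge0 // => x _.
by rewrite mulr_ge0 // /channel divr_ge0 // ltW.
Qed.

Lemma push_lin {R:realType} (X Y : finType) (W : Y -> X -> R) (p r : X -> R) (e : R) y :
  push W (fun x => (1 - e) * p x + e * r x) y = (1 - e) * push W p y + e * push W r y.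
Proof.
rewrite /push !mulr_sumr -big_split /=; apply: eq_bigr => x _; ring.
Qed.

Lemma chi2_scale {R:realType} (T : finType) (s p r : T -> R) (e : R) :
  (forall x, s x = (1 - e) * p x + e * r x) ->
  chi2div s p = e ^+ 2 * chi2div r p.
Proof.
move=> H; rewrite /chi2div mulr_sumr; apply: eq_bigr => x _.
rewrite H.
have -> : (1 - e) * p x + e * r x - p x = e * (r x - p x) by ring.
by rewrite exprMn mulrA.
Qed.

Lemma final_arith {R:realType} (k A B DX DY eta e ep : R) :
  0 < k -> 0 < A -> 0 <= B -> 0 < ep -> 0 < eta -> eta <= 1 ->
  eta * (B / A + 1) * (k + 2) <= e * k -> 0 < e -> 0 < DX ->
  DX <= (k + eta) * (ep * A) -> k * (ep * B) <= (1 + eta) * DY ->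
  B / A <= DY / DX + e.
Proof.
move=> k0 A0 B0 ep0 et0 et1 He e0 DX0 HX HY.
set b := B / A.
have Bb : B = b * A by rewrite /b divfK // gt_eqF.
have b0 : 0 <= b by rewrite /b divr_ge0 // ltW.
set v := DY / DX.
have DYv : DY = v * DX by rewrite /v divfK // gt_eqF.
have DY0 : 0 <= DY.
  have : 0 <= k * (ep * B) by rewrite mulr_ge0 // ?mulr_ge0 // ltW.
  move=> h; have := le_trans h HY; rewrite pmulr_rge0 //; lra.
have v0 : 0 <= v by rewrite /v divr_ge0 // ltW.
have H1 : k * b <= (1 + eta) * (k + eta) * v.
  have : k * (ep * B) <= (1 + eta) * (v * ((k + eta) * (ep * A))).
    apply: (le_trans HY); rewrite DYv; apply: ler_wpM2l; first lra.
    by apply: ler_wpM2l.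
  rewrite Bb => h.
  have : ep * A * (k * b) <= ep * A * ((1 + eta) * (k + eta) * v).
    have -> : ep * A * (k * b) = k * (ep * (b * A)) by ring.
    have -> : ep * A * ((1 + eta) * (k + eta) * v) = (1 + eta) * (v * ((k + eta) * (ep * A))) by ring.
    exact: h.
  by rewrite ler_pM2l // mulr_gt0.
have H2 : b * eta * (1 + k + eta) <= (1 + eta) * (k + eta) * e.
  have be : 0 <= b * eta by rewrite mulr_ge0 // ltW.
  have : b * eta * (1 + k + eta) <= b * eta * (k + 2) by apply: ler_wpM2l => //; lra.
  have : b * eta * (k + 2) <= eta * (b + 1) * (k + 2).
    rewrite (mulrC b); apply: ler_wpM2r; first lra.
    apply: ler_wpM2l; [exact: ltW | lra].
  move=> h1 h2; have := le_trans h2 h1.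
  move=> h; apply: (le_trans h); apply: (le_trans He).
  have hk : k <= (1 + eta) * (k + eta) by nra.
  rewrite [X in _ <= X]mulrC; apply: ler_wpM2l; [exact: ltW | exact: hk].
have H3 : (1 + eta) * (k + eta) * b <= (1 + eta) * (k + eta) * (v + e) by nra.
have p0 : 0 < (1 + eta) * (k + eta) by apply: mulr_gt0; lra.
by move: H3; rewrite ler_pM2l.
Qed.

Theorem theorem4 (R : realType) (X Y : finType) (PXY : X -> Y -> R)
  (f : R -> R) (f0 : R) :
  (2 <= #|X|)%N -> (2 <= #|Y|)%N ->
  is_joint_pmf PXY ->
  (forall x, 0 < marginalX PXY x) -> (forall y, 0 < marginalY PXY y) ->
  convex_pos f -> strictly_convex_at1 f -> thrice_diff_at1 f ->
  f 1 = 0 -> 0 < derive1n 2 f 1 ->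
  (forall t, 0 < t ->
     (f t - derive1n 1 f 1 * (t - 1))
       * (1 - derive1n 3 f 1 / (3 * derive1n 2 f 1) * (t - 1))
     >= derive1n 2 f 1 / 2 * (t - 1) ^+ 2) ->
  f x @[x --> 0^'+] --> f0 ->
  concave_pos (fun x => (f x - f0) / x) ->
  let PX := marginalX PXY in
  let W := channel PXY in
  let eta_chi2 := contr_coef (@chi2div R X) (@chi2div R Y) PX W in
  let eta_f := contr_coef (@fdiv R f f0 X) (@fdiv R f f0 Y) PX W in
  (eta_chi2 <= eta_f)%E /\
  (eta_f <= ((derive1n 1 f 1 + f0) / (derive1n 2 f 1 * minval PX))%:E * eta_chi2)%E.
Proof.
move=> _ _ [PXY0 PXY1] PXp PYp cvx _ [Hnear Hd3] f1 d2p Hcond cf0 ccv PX W eta_chi2 eta_f.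
have df1 : derivable f 1 1 by case: (nbhs_singleton Hnear).
have dd1 : derivable (derive1 f) 1 1 by case: (nbhs_singleton Hnear).
have Hnear1 : \forall x \near (1:R), derivable f x 1 by apply: filterS Hnear => x [].
change (derive1n 1 f 1) with (derive1 f 1) in Hcond |- *.
change (derive1n 2 f 1) with (derive1 (derive1 f) 1) in Hcond |- *.
change (derive1n 2 f 1) with (derive1 (derive1 f) 1) in d2p.
set d1 := derive1 f 1 in Hcond *.
set d2 := derive1 (derive1 f) 1 in Hcond d2p *.
set a := derive1n 3 f 1 / (3 * d2) in Hcond.
set k := d2 / 2.
have k0 : 0 < k by rewrite /k divr_gt0.
have Hc : forall t, 0 < t -> k * (t - 1) ^+ 2 <= (f t - d1 * (t - 1)) * (1 - a * (t - 1)).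
  by move=> t t0; have := Hcond t t0.
have P1 : forall t, 0 < t -> 0 <= f t - d1 * (t - 1).
  move=> t t0.
  have := @tangent _ f 1 d1 ltr01 cvx _ t t0.
  rewrite f1 add0r; move=> h; rewrite subr_ge0; apply: h.
  move=> e e0; have [d d0 Hd] := @deriv_eps _ f 1 df1 e e0.
  by exists d => // u u0 ud; have := Hd u u0 ud; rewrite f1.
have P2 : 0 <= f0 + d1.
  have := @lim_at0 _ f f0 d1 0 0 cf0.
  rewrite addr0 mulr1; apply => t t0.
  by rewrite mul0r mul0r subr0 mulr1; exact: P1.
have P3 : k <= (f0 + d1) * (1 + a) by exact: (@lim_at0 _ f f0 d1 a k cf0 Hc).
have P4 := @g_bound _ f f0 df1 f1 ccv.
clearbody a.
set c := d1 + f0.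
have c0 : 0 <= c by rewrite /c addrC.
have PX1 : \sum_x PX x = 1 by rewrite /PX /marginalX.
have PX0 : forall x, 0 <= PX x by move=> x; exact: ltW.
set q := push W PX.
have qE : forall y, q y = marginalY PXY y by move=> y; exact: push_PX.
have qp : forall y, 0 < q y by move=> y; rewrite qE.
have q1 : \sum_y q y = 1 by rewrite /q push_sum.
set mX := minval PX.
have mX0 : 0 < mX by exact: minval_gt0.
set mY := minval q.
have mY0 : 0 < mY by exact: minval_gt0.
have LBX : forall r : X -> R, is_pmf r -> d2 * mX * chi2div r PX <= fdiv f f0 r PX.
  move=> r [r0 r1].
  have Hs : \sum_x r x = \sum_x PX x by rewrite r1 PX1.
  have := @fdiv_lb _ f f0 d1 k a X r PX k0 P1 P2 P3 Hc PXp r0 Hs PX1.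
  have := @chi2_V _ X r PX mX PXp mX0 (fun x => @minval_le _ _ PX x) Hs.
  move=> h1 h2; apply: le_trans h2.
  have : k * (2 * mX * chi2div r PX) <= k * (\sum_x `|r x - PX x|) ^+ 2 by rewrite ler_pM2l.
  by rewrite /k mulrA mulrA divfK ?pnatr_eq0.
split.
-
  apply: ge_ereal_sup => _ [r [rpmf A0] <-].
  have [r0 r1] := rpmf.
  set A := chi2div r PX in A0 *.
  set B := chi2div (push W r) q.
  have B0 : 0 <= B by rewrite /B /chi2div sumr_ge0 // => y _; rewrite divr_ge0 ?sqr_ge0 // ltW.
  apply/lee_addgt0Pr => e e0.
  set b := B / A.
  have b0 : 0 <= b by rewrite /b divr_ge0 // ltW.
  set eta := Num.min 1 (e * k / ((b + 1) * (k + 2))).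
  have eta0 : 0 < eta.
    rewrite /eta lt_min ltr01 /= divr_gt0 ?mulr_gt0 //; lra.
  have eta1 : eta <= 1 by rewrite /eta ge_min lexx.
  have etaH : eta * (b + 1) * (k + 2) <= e * k.
    have : eta <= e * k / ((b + 1) * (k + 2)) by rewrite /eta ge_min lexx orbT.
    rewrite ler_pdivlMr; last by apply: mulr_gt0; lra.
    by rewrite mulrA.
  have [dT dT0 HT] := @taylor_up _ f Hnear1 dd1 eta eta0.
  set ep := Num.min (1/2) (Num.min (dT * mX / 2) (eta * mY / (2 * (`|a| + 1)))).
  have ap : 0 < `|a| + 1 by rewrite ltr_pwDr // normr_ge0.
  have ep0 : 0 < ep.
    rewrite /ep !lt_min; apply/and3P; split; first lra.
      by rewrite divr_gt0 // mulr_gt0.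
    by rewrite divr_gt0 // ?mulr_gt0.
  have ep12 : ep <= 1/2 by rewrite /ep ge_min lexx.
  have epX : ep <= dT * mX / 2 by rewrite /ep !ge_min lexx orbT.
  have epY : ep <= eta * mY / (2 * (`|a| + 1)) by rewrite /ep !ge_min lexx !orbT.
  set re := fun x => (1 - ep) * PX x + ep * r x.
  have rep : forall x, 0 < re x.
    move=> x; rewrite /re; have h1 : 0 < (1 - ep) * PX x by rewrite mulr_gt0 //; lra.
    have h2 : 0 <= ep * r x by rewrite mulr_ge0 // ltW. lra.
  have re1 : \sum_x re x = 1.
    rewrite /re big_split /= -!mulr_sumr PX1 r1; ring.
  have reS : \sum_x re x = \sum_x PX x by rewrite re1 PX1.
  have rechi : chi2div re PX = ep ^+ 2 * A by apply: chi2_scale.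
  have pre : forall y, push W re y = (1 - ep) * q y + ep * push W r y.
    by move=> y; rewrite /re push_lin.
  have pr0 : forall y, 0 <= push W r y by move=> y; exact: push_ge0.
  have pr1 : \sum_y push W r y = 1 by rewrite push_sum.
  have prep : forall y, 0 < push W re y.
    by move=> y; rewrite pre; have := qp y; have := pr0 y; nra.
  have preS : \sum_y push W re y = \sum_y q y by rewrite push_sum // re1 q1.
  have prechi : chi2div (push W re) q = ep ^+ 2 * B by apply: chi2_scale.
  have DXup : fdiv f f0 re PX <= (k + eta) * (ep ^+ 2 * A).
    rewrite -rechi; apply: (@fdiv_taylor _ f f0 d1 (k + eta) dT) => //.
    move=> x; rewrite /re.
    have px := PXp x.
    have -> : ((1 - ep) * PX x + ep * r x) / PX x - 1 = ep * (r x - PX x) / PX x.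
      by field; rewrite gt_eqF.
    rewrite normrM normfV (gtr0_norm px) normrM (gtr0_norm ep0).
    have h1 : `|r x - PX x| <= 1.
      have a1 := @pmf_le1 _ _ _ x r0 r1; have a2 := r0 x;
      have a3 := @pmf_le1 _ _ _ x PX0 PX1; have a4 := PX0 x.
      rewrite ler_norml; apply/andP; split; lra.
    have mx := @minval_le _ _ PX x; rewrite -/mX in mx.
    rewrite ltr_pdivrMr //.
    have : ep * `|r x - PX x| <= ep by rewrite ler_piMr // ltW.
    have : dT * mX <= dT * PX x by rewrite ler_pM2l.
    have : 0 < dT * mX by rewrite mulr_gt0. rewrite -/PX; lra.
  have DYlow : k * (ep ^+ 2 * B) <= (1 + eta) * fdiv f f0 (push W re) q.
    rewrite -prechi; apply: (@fdiv_lowloc _ f f0 d1 k a eta) => //.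
    move=> y; rewrite pre.
    have py := qp y.
    have -> : ((1 - ep) * q y + ep * push W r y) / q y - 1 = ep * (push W r y - q y) / q y.
      by field; rewrite gt_eqF.
    rewrite normrM [`|ep * _ / _|]normrM normrM normfV (gtr0_norm py) (gtr0_norm ep0).
    have h1 : `|push W r y - q y| <= 1.
      have a1 := @pmf_le1 _ _ _ y pr0 pr1; have a2 := pr0 y;
      have a3 := @pmf_le1 _ _ _ y (fun y => ltW (qp y)) q1; have a4 := ltW (qp y).
      rewrite ler_norml; apply/andP; split; lra.
    have my := @minval_le _ _ q y; rewrite -/mY in my.
    have na := normr_ge0 a.
    have : `|a| * (ep * `|push W r y - q y| / q y) <= `|a| * (ep / mY).
      apply: ler_wpM2l => //.
      rewrite ler_pdivrMr // mulrAC ler_pdivlMr //.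
      have : ep * `|push W r y - q y| <= ep by rewrite ler_piMr // ltW.
      have : ep * mY <= ep * q y by rewrite ler_pM2l.
      have := normr_ge0 (push W r y - q y).
      nra.
    move=> h; apply: (le_trans h).
    have : ep <= eta * mY / (2 * (`|a| + 1)) := epY.
    rewrite ler_pdivlMr ?mulr_gt0 // => h2.
    rewrite mulrA ler_pdivrMr //.
    have : 0 <= eta * mY by rewrite mulr_ge0 // ltW.
    nra.
  have DX0 : 0 < fdiv f f0 re PX.
    have := LBX re (conj (fun x => ltW (rep x)) re1).
    rewrite rechi => h; apply: lt_le_trans h.
    by rewrite !mulr_gt0 // exprn_even_gt0 // gt_eqF.
  have key : b <= fdiv f f0 (push W re) q / fdiv f f0 re PX + e.
    apply: (@final_arith _ k A B _ _ eta e (ep ^+ 2)) => //.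
    by rewrite exprn_gt0.
  have mem : [set ((fdiv f f0 (push W r0) (push W PX)) / (fdiv f f0 r0 PX))%:E
            | r0 in [set r0 : X -> R | is_pmf r0 /\ 0 < fdiv f f0 r0 PX]]
            ((fdiv f f0 (push W re) q / fdiv f f0 re PX)%:E).
    exists re => //; split => //; split => //; move=> x; exact: ltW.
  have := ereal_sup_ubound mem.
  rewrite -/eta_f => h.
  apply: (le_trans _ (leeD2r _ h)).
  by rewrite -EFinD lee_fin.
-
  apply: ge_ereal_sup => _ [r [rpmf DX0] <-].
  have [r0 r1] := rpmf.
  have Hs : \sum_x r x = \sum_x PX x by rewrite r1 PX1.
  set DX := fdiv f f0 r PX in DX0 *.
  set DY := fdiv f f0 (push W r) (push W PX).
  set cX := chi2div r PX.
  set cY := chi2div (push W r) (push W PX).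
  have pr0 : forall y, 0 <= push W r y by move=> y; exact: push_ge0.
  have prS : \sum_y push W r y = \sum_y q y by rewrite push_sum // r1 q1.
  have DYub : DY <= c * cY by apply: (@fdiv_ub _ f f0 c Y) => //.
  have DXub : DX <= c * cX by apply: (@fdiv_ub _ f f0 c X) => //.
  have DXlb : d2 * mX * cX <= DX by apply: LBX.
  have cX0 : 0 <= cX by rewrite /cX /chi2div sumr_ge0 // => x _; rewrite divr_ge0 ?sqr_ge0 // ltW.
  have cXp : 0 < cX.
    rewrite lt_def cX0 andbT; apply/negP => /eqP h; move: DXub; rewrite h mulr0; lra.
  have cY0 : 0 <= cY by rewrite /cY /chi2div sumr_ge0 // => y _; rewrite divr_ge0 ?sqr_ge0 // ltW.
  have mem : [set ((chi2div (push W r0) (push W PX)) / (chi2div r0 PX))%:E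
            | r0 in [set r0 : X -> R | is_pmf r0 /\ 0 < chi2div r0 PX]] ((cY / cX)%:E).
    by exists r.
  have := ereal_sup_ubound mem.
  rewrite -/eta_chi2 => h.
  have C0 : 0 <= c / (d2 * mX) by rewrite divr_ge0 // mulr_ge0 // ltW.
  apply: (le_trans _ (lee_wpmul2l _ h)); last by rewrite lee_fin.
  rewrite -EFinM lee_fin.
  have dm : 0 < d2 * mX by rewrite mulr_gt0.
  rewrite ler_pdivrMr //; apply: (le_trans DYub).
  rewrite [X in _ <= X](_ : _ = (c * cY) * (DX / (d2 * mX * cX))); last first.
    by field; rewrite !gt_eqF.
  have h1 : 1 <= DX / (d2 * mX * cX) by rewrite ler_pdivlMr ?mulr_gt0 // mul1r.
  have := mulr_ge0 c0 cY0.
  nra.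
Qed.
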